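(* There is an absolute constant $c>0$ such that the following holds. Let $(V,E^+\uplus E^-)$ be a Correlation Clustering instance with optimum cost $\mathrm{opt}$, let $\mathcal C$ be a clustering of $V$ with $\mathrm{obj}(\mathcal C)\le3\,\mathrm{opt}$, and let $\mathcal K$ be the partition of $V$ constructed from $\mathcal C$ as described in the context (with $\beta=0.1$). Then $\mathrm{obj}(\mathcal K)\le c\cdot\mathrm{opt}$, where $\mathcal K$ is viewed as a clustering.
   Context: A Correlation Clustering instance consists of a finite vertex set $V$ and a partition $E^+\uplus E^-=\binom V2$ of unordered pairs of distinct vertices into $+$edges and $-$edges. For a clustering (partition) $\mathcal C$ of $V$, $\mathrm{obj}(\mathcal C)$ is the number of $+$edges between different parts plus the number of $-$edges inside parts; $\mathrm{opt}$ is its minimum. By convention every vertex has a $+$ self-loop, so the set $N^+_u$ of $+$neighbours of $u$ contains $u$ (self-loops never contribute to cost). $A\triangle B$ denotes symmetric difference. Construction of $\mathcal K$ with $\beta=0.1$: for every non-singleton $C\in\mathcal C$, mark every $u\in C$ with $|N^+_u\triangle C|>\frac\beta2|C|$, and then, if at least $\frac{\beta|C|}{3}$ vertices of $C$ are marked, mark all vertices of $C$. $\mathcal K$ is obtained from $\mathcal C$ by removing every marked vertex from its cluster and making it a singleton cluster. The parts of $\mathcal K$ are called atoms. *)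

(* Defs.v *)
From mathcomp Require Import all_boot.
Set Implicit Arguments. Unset Strict Implicit. Unset Printing Implicit Defensive.

Section CC.
Variable V : finType.
(* A Correlation Clustering instance on V: [pos u v] means {u,v} is a +edge;
   every other pair of distinct vertices is a -edge. [pos] is assumed symmetric
   in the theorem. *)
Variable pos : rel V.

Definition disagree (P : {set {set V}}) (u v : V) : bool :=
  (u != v) && (if pos u v then pblock P u != pblock P v
               else pblock P u == pblock P v).

(* obj counts unordered pairs: the ordered count is exactly twice it (pos symmetric) *)
Definition obj (P : {set {set V}}) : nat :=
  #|[set p : V * V | disagree P p.1 p.2]| %/ 2.

Definition singletons : {set {set V}} := [set [set x] | x in V].

Definition opt : nat :=
  \big[minn/obj singletons]_(P : {set {set V}} | partition P [set: V]) obj P.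

Definition Nplus (u : V) : {set V} := [set v | (v == u) || pos u v].

Definition symdiff (A B : {set V}) : {set V} := (A :\: B) :|: (B :\: A).

(* beta = 1/10: |N^+_u (sym.diff.) C| > (beta/2)|C|  <=>  20 |..| > |C| *)
Definition bad (C : {set V}) (u : V) : bool :=
  20 * #|symdiff (Nplus u) C| > #|C|.

(* marking inside a non-singleton cluster C;
   at least beta|C|/3 marked  <=>  30 * #marked >= |C| *)
Definition marked (P : {set {set V}}) (u : V) : bool :=
  [exists C in P, [&& u \in C, 1 < #|C| &
     bad C u || (#|C| <= 30 * #|[set w in C | bad C w]|)]].

Definition Mset (P : {set {set V}}) : {set V} := [set u | marked P u].

Definition Kof (P : {set {set V}}) : {set {set V}} :=
  ([set C :\: Mset P | C in P] :\ set0) :|: [set [set u] | u in Mset P].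

End CC.

(* Main.v *)
Require Import Defs.
From mathcomp Require Import all_boot zify.
Set Implicit Arguments. Unset Strict Implicit. Unset Printing Implicit Defensive.

Section Proof.
Variable V : finType.
Variable pos : rel V.
Hypothesis pos_sym : symmetric pos.

Lemma card_pairs (f : V -> V -> bool) :
  #|[set p : V * V | f p.1 p.2]| = \sum_u #|[set v | f u v]|.
Proof.
rewrite -sum1_card.
rewrite (eq_bigl (fun p : V * V => predT p.1 && f p.1 p.2)); last by move=> p; rewrite inE.
rewrite -(pair_big_dep predT (fun u v => f u v) (fun _ _ => 1)) /=.
by apply: eq_bigr => u _; rewrite sum1_card; apply: eq_card => v; rewrite inE.
Qed.

Lemma card_swap (f : V -> V -> bool) :
  #|[set p : V * V | f p.2 p.1]| = #|[set p : V * V | f p.1 p.2]|.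
Proof.
have inj : injective (fun p : V * V => (p.2, p.1)) by move=> [a b] [c d] [-> ->].
rewrite -(card_imset _ inj); apply: eq_card => [[a b]].
rewrite !inE /=.
apply/imsetP/idP => [[[c d]] | H].
  by rewrite inE /= => H [-> ->].
by exists (b, a); rewrite ?inE.
Qed.

Lemma disagree_sym P u v : disagree pos P u v = disagree pos P v u.
Proof. by rewrite /disagree eq_sym pos_sym [pblock P v == _]eq_sym. Qed.

Definition D P := #|[set p : V * V | disagree pos P p.1 p.2]|.

Lemma D_ge2 P : 0 < D P -> 1 < D P.
Proof.
rewrite /D => /card_gt0P [[a b]]; rewrite inE /= => H.
have ab : a != b by move: H; rewrite /disagree => /andP[].
have -> : 1 = (((a, b) != (b, a)) : nat).
  by case: eqP => // [[E _]]; move: ab; rewrite E eqxx.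
rewrite -cards2; apply: subset_leq_card; apply/subsetP => p.
by rewrite !inE => /orP[] /eqP -> //=; rewrite disagree_sym.
Qed.


Variable P : {set {set V}}.
Hypothesis hP : partition P [set: V].

Let covP : cover P = [set: V]. Proof. by case/and3P: hP => /eqP. Qed.
Let tP : trivIset P. Proof. by case/and3P: hP. Qed.
Let inB u : u \in pblock P u. Proof. by rewrite mem_pblock covP inE. Qed.
Let BP u : pblock P u \in P. Proof. by apply: pblock_mem; rewrite covP inE. Qed.
Let sameB u v : v \in pblock P u -> pblock P v = pblock P u.
Proof. exact: same_pblock. Qed.
Let defB A x : A \in P -> x \in A -> pblock P x = A.
Proof. exact: def_pblock. Qed.

Local Notation M := (Mset pos P).
Local Notation K := (Kof pos P).

Definition heavy (C : {set V}) := #|C| <= 30 * #|[set w in C | bad pos C w]|.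

Lemma marked_char u : u \in M -> 1 < #|pblock P u| /\ (bad pos (pblock P u) u || heavy (pblock P u)).
Proof.
rewrite inE /marked => /existsP [C] /and4P [CP uC c1 H].
by rewrite (defB CP uC).
Qed.

Definition fK x := if x \in M then [set x] else pblock P x :\: M.

Lemma inK A x : A \in K -> x \in A -> A = fK x.
Proof.
rewrite /Kof /fK in_setU in_setD1 => /orP [/andP [_ /imsetP [C CP ->]] | /imsetP [u uM ->]].
  rewrite in_setD => /andP [xM xC]; by rewrite (defB CP xC) (negbTE xM).
by rewrite in_set1 => /eqP ->; rewrite uM.
Qed.

Lemma fK_in x : x \in fK x.
Proof. by rewrite /fK; case: ifP => xM; rewrite ?in_set1 ?in_setD ?xM ?inB. Qed.

Lemma fK_K x : fK x \in K.
Proof.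
rewrite /Kof /fK in_setU in_setD1; case: ifP => xM.
  by apply/orP; right; apply/imsetP; exists x.
apply/orP; left; apply/andP; split.
  by apply/eqP => /setP /(_ x); rewrite in_setD xM inB inE.
by apply/imsetP; exists (pblock P x).
Qed.

Lemma tK : trivIset K.
Proof.
apply/trivIsetP => A B AK BK AB.
rewrite -setI_eq0; apply/eqP/setP => y; rewrite !inE.
apply/negP => /andP [yA yB]; move/negP: AB; apply.
by rewrite (inK AK yA) (inK BK yB).
Qed.

Lemma pbK x : pblock K x = fK x.
Proof. exact: def_pblock tK (fK_K x) (fK_in x). Qed.

Definition E u v := (u \in M) && (v \in pblock P u).

Lemma DK_sub u v : disagree pos K u v -> [|| disagree pos P u v, E u v | E v u].
Proof.
rewrite /disagree !pbK => /andP [uv]; rewrite uv /=.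
have vfv := fK_in v.
case: ifP => puv.
  move=> nf; case: (eqVneq (pblock P u) (pblock P v)) => [eB|//].
  rewrite /E; case uM: (u \in M); first by rewrite /= eB inB ?(orTb, orbT).
  case vM: (v \in M); first by rewrite /= -eB inB ?(orTb, orbT).
  by rewrite /fK uM vM eB eqxx in nf.
move=> /eqP ef; rewrite -ef /fK in vfv.
case: ifP vfv => uM.
  by rewrite in_set1 => /eqP vu; rewrite vu eqxx in uv.
by rewrite in_setD => /andP [_ vB]; rewrite (sameB vB) eqxx.
Qed.

Lemma DK_le : D K <= D P + 2 * #|[set p : V * V | E p.1 p.2]|.
Proof.
rewrite /D.
apply: (@leq_trans #|([set p : V * V | disagree pos P p.1 p.2] :|: [set p : V * V | E p.1 p.2]) :|: [set p : V * V | E p.2 p.1]|).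
  apply: subset_leq_card; apply/subsetP => p; rewrite !in_setU !in_set => /DK_sub.
  by rewrite orbA.
rewrite cardsU (cardsU [set p : V * V | disagree pos P p.1 p.2]) card_swap.
lia.
Qed.

Definition s u := #|[set v | disagree pos P u v]|.

Lemma sym_row x : symdiff (Nplus pos x) (pblock P x) \subset [set v | disagree pos P x v].
Proof.
apply/subsetP => v; rewrite /symdiff /Nplus in_setU !in_setD !in_set /disagree.
move=> /orP [/andP [vB /orP [/eqP vx | pxv]] | /andP [vN vB]].
- by rewrite vx inB in vB.
- rewrite pxv; apply/andP; split.
    by apply/eqP => vx; rewrite -vx inB in vB.
  by apply/eqP => eB; rewrite eB inB in vB.
- move: vN; rewrite negb_or => /andP [vx npv].
  by rewrite eq_sym vx (negbTE npv) (sameB vB) eqxx.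
Qed.

Lemma bad_s x : bad pos (pblock P x) x -> #|pblock P x| <= 20 * s x.
Proof.
rewrite /bad => H; have := subset_leq_card (sym_row x); rewrite -/(s x); lia.
Qed.

Lemma X_eq : #|[set p : V * V | E p.1 p.2]| = \sum_u ((u \in M) * #|pblock P u|).
Proof.
rewrite card_pairs; apply: eq_bigr => u _; rewrite /E.
case: (u \in M) => /=; last by rewrite mul0n; apply/eqP; rewrite cards_eq0; apply/eqP/setP => v; rewrite !inE.
by rewrite mul1n; apply: eq_card => v; rewrite inE.
Qed.

Lemma split_sum (F : V -> nat) : \sum_u F u = \sum_(A in P) \sum_(u in A) F u.
Proof.
have := @big_trivIset V nat 0 addn P F tP; rewrite covP /= => <-.
by apply: eq_bigl => u; rewrite in_setT.
Qed.

Lemma sumM k (A : {pred V}) (F : V -> nat) : \sum_(u in A) k * F u = k * \sum_(u in A) F u.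
Proof. by rewrite big_distrr. Qed.

Lemma X_bound : \sum_u ((u \in M) * #|pblock P u|) <= 620 * \sum_u s u.
Proof.
rewrite !split_sum big_distrr /=; apply: leq_sum => A AP.
rewrite (eq_bigr (fun u => (u \in M) * #|A|)); last by move=> u uA; rewrite (defB AP uA).
case: (boolP (heavy A)) => hA.
  have h1 : \sum_(u in A) (u \in M) * #|A| <= #|A| * #|A|.
    rewrite -sum_nat_const; apply: leq_sum => u _; case: (u \in M); lia.
  set bA := [set w in A | bad pos A w].
  have h2 : #|A| * #|A| <= 30 * #|bA| * #|A| by rewrite leq_mul2r; apply/orP; right; exact: hA.
  have h3 : #|bA| * #|A| <= \sum_(u in A) 20 * s u.
    rewrite -sum_nat_const.
    apply: (@leq_trans (\sum_(w in bA) 20 * s w)).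
      apply: leq_sum => w; rewrite inE => /andP [wA bw].
      by have := bad_s (x := w); rewrite (defB AP wA); apply.
    rewrite [X in _ <= X](big_mkcond (fun u => u \in A)) (big_mkcond (fun u => u \in bA)) /=.
    apply: leq_sum => w _; rewrite inE; case: (w \in A) => //=; case: (bad _ _ _) => //.
  rewrite sumM in h3.
  have := leq_mul (leqnn 30) h3; lia.
apply: (@leq_trans (\sum_(u in A) 20 * s u)).
  apply: leq_sum => u uA; case uM: (u \in M); last by rewrite mul0n.
  have [_] := marked_char uM; rewrite (defB AP uA) (negbTE hA) orbF => bu.
  by have := bad_s (x := u); rewrite (defB AP uA) mul1n; apply.
rewrite sumM; lia.
Qed.

Lemma DK_bound : D K <= 1241 * D P.
Proof.
have := DK_le; rewrite X_eq.
have := X_bound.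
have -> : D P = \sum_u s u by rewrite /D card_pairs.
lia.
Qed.

End Proof.

Theorem lemma6 :
  exists c : nat, 0 < c /\
  forall (V : finType) (pos : rel V), symmetric pos ->
  forall C : {set {set V}}, partition C [set: V] ->
  obj pos C <= 3 * opt pos ->
  obj pos (Kof pos C) <= c * opt pos.
Proof.
exists (1241 * 9); split => // V pos psym C hC hopt.
have hK : D pos (Kof pos C) <= 1241 * D pos C by apply: DK_bound.
have h2 : 0 < D pos C -> 1 < D pos C by apply: D_ge2.
move: hopt hK h2; rewrite /obj /D.
set d := #|_|; set dK := #|_|.
move=> hopt hK h2.
case: (posnP d) => [d0|dpos].
  by rewrite d0 in hK; have -> : dK = 0 by lia.
have := h2 dpos; lia.
Qed.
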